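(* For every $n\ge2$ and all integers $n_a\ge n_b\ge1$ with $n_a+n_b=n$, $$\mathcal{C}(T^{mb}_n)\le \mathcal{C}(T^{mb}_{n_a})+\mathcal{C}(T^{mb}_{n_b})+n_a-n_b.$$
   Context: Bifurcating trees: rooted trees in which every internal node has exactly two children; considered up to isomorphism. For a node $w$ of $T$, $\kappa_T(w)$ is its number of descendant leaves. The Colless index is $\mathcal{C}(T)=\sum_{v}|\kappa_T(v_1)-\kappa_T(v_2)|$, summed over internal nodes $v$ with children $v_1,v_2$. An internal node is balanced if the numbers of descendant leaves of its two children differ by at most 1. A bifurcating tree is maximally balanced if all its internal nodes are balanced; for each $n\ge1$ there is a unique such tree with $n$ leaves, denoted $T^{mb}_n$, and for $n\ge2$ its two subtrees rooted at the children of the root are $T^{mb}_{\lceil n/2\rceil}$ and $T^{mb}_{\lfloor n/2\rfloor}$. *)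

(* Defs.v *)
From Stdlib Require Import Arith.

(* Rooted bifurcating trees (plane representatives; Colless index and
   maximal balance are invariant under isomorphism). *)
Inductive btree : Type :=
| Leaf : btree
| Node : btree -> btree -> btree.

Fixpoint leaves (t : btree) : nat :=
  match t with
  | Leaf => 1
  | Node l r => leaves l + leaves r
  end.

Definition absdiff (a b : nat) : nat := (a - b) + (b - a).

Fixpoint colless (t : btree) : nat :=
  match t with
  | Leaf => 0
  | Node l r => absdiff (leaves l) (leaves r) + colless l + colless r
  end.

Fixpoint max_balanced (t : btree) : Prop :=
  match t with
  | Leaf => True
  | Node l r => absdiff (leaves l) (leaves r) <= 1
                /\ max_balanced l /\ max_balanced r
  end.

(* Main.v *)
Require Import Defs.
From Stdlib Require Import Arith Lia.

Lemma dm n : n = 2*(n/2) + n mod 2 /\ n mod 2 < 2.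
Proof. split. apply Nat.div_mod_eq. apply Nat.mod_upper_bound; lia. Qed.

Fixpoint cf (k n : nat) : nat :=
  match k with
  | 0 => 0
  | S k => if n <=? 1 then 0 else n mod 2 + cf k ((n+1)/2) + cf k (n/2)
  end.

Definition c n := cf n n.

Lemma cf_S k n : cf (S k) n =
  if n <=? 1 then 0 else n mod 2 + cf k ((n+1)/2) + cf k (n/2).
Proof. reflexivity. Qed.

Lemma cf_fuel : forall k1 k2 n, n <= k1 -> n <= k2 -> cf k1 n = cf k2 n.
Proof.
  induction k1 as [|k1 IH]; intros k2 n H1 H2.
  - assert (n = 0) by lia; subst. destruct k2; reflexivity.
  - destruct k2 as [|k2]; [assert (n=0) by lia; subst; reflexivity|].
    rewrite !cf_S. destruct (n <=? 1) eqn:E; [reflexivity|].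
    apply Nat.leb_gt in E. destruct (dm n), (dm (n+1)).
    rewrite (IH k2 ((n+1)/2)) by lia. rewrite (IH k2 (n/2)) by lia. reflexivity.
Qed.

Lemma c_unfold n : 2 <= n -> c n = n mod 2 + c ((n+1)/2) + c (n/2).
Proof.
  intros H. unfold c. destruct n as [|n]; [lia|]. rewrite cf_S.
  destruct (S n <=? 1) eqn:E; [apply Nat.leb_le in E; lia|].
  destruct (dm (S n)), (dm (S n + 1)).
  rewrite (cf_fuel n ((S n + 1)/2)) by lia.
  rewrite (cf_fuel n (S n/2)) by lia. reflexivity.
Qed.

Lemma c0 : c 0 = 0. Proof. reflexivity. Qed.
Lemma c1 : c 1 = 0. Proof. reflexivity. Qed.

Lemma c_ev p : 1 <= p -> c (p + p) = c p + c p.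
Proof.
  intros H. rewrite c_unfold by lia. destruct (dm (p+p)), (dm (p+p+1)).
  replace ((p+p) mod 2) with 0 by lia.
  replace ((p+p+1)/2) with p by lia. replace ((p+p)/2) with p by lia. lia.
Qed.

Lemma c_od p : 1 <= p -> c (p + 1 + p) = 1 + c (p + 1) + c p.
Proof.
  intros H. rewrite c_unfold by lia. destruct (dm (p+1+p)), (dm (p+1+p+1)).
  replace ((p+1+p) mod 2) with 1 by lia.
  replace ((p+1+p+1)/2) with (p+1) by lia. replace ((p+1+p)/2) with p by lia. lia.
Qed.

Lemma c_ev1 p : c (p + 1 + (p + 1)) = c (p+1) + c (p+1).
Proof. apply c_ev; lia. Qed.

Lemma leaves_pos t : 1 <= leaves t.
Proof. induction t; simpl; lia. Qed.

Lemma colless_mb t : max_balanced t -> colless t = c (leaves t).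
Proof.
  induction t as [|l IHl r IHr]; simpl; [reflexivity|].
  intros [Hd [Hl Hr]]. rewrite IHl, IHr by assumption.
  pose proof (leaves_pos l). pose proof (leaves_pos r).
  unfold absdiff in *.
  destruct (Nat.lt_total (leaves l) (leaves r)) as [E|[E|E]].
  - assert (leaves r = leaves l + 1) as E2 by lia. rewrite E2.
    replace (leaves l + (leaves l + 1)) with (leaves l + 1 + leaves l) by lia.
    rewrite c_od by lia. lia.
  - rewrite E. rewrite c_ev by lia. lia.
  - assert (leaves l = leaves r + 1) as E2 by lia. rewrite E2.
    rewrite c_od by lia. lia.
Qed.

Lemma main : forall n a b, a + b = n -> 1 <= b -> b <= a ->
  c (a + b) <= c a + c b + absdiff a b.
Proof.
  induction n as [n IH] using lt_wf_ind.
  intros a b Hn Hb Hab.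
  assert (IH' : forall x y, 1 <= x -> 1 <= y -> x + y < n ->
            c (x + y) <= c x + c y + absdiff x y).
  { intros x y Hx Hy Hl. destruct (Nat.le_gt_cases y x).
    - apply (IH (x+y)); lia.
    - replace (x+y) with (y+x) by lia.
      pose proof (IH (y+x) ltac:(lia) y x eq_refl Hx ltac:(lia)). unfold absdiff in *; lia. }
  clear IH. unfold absdiff.
  destruct (dm a) as [Ea Ra]. set (p := a/2) in *. set (r := a mod 2) in *.
  destruct (dm b) as [Eb Rb]. set (q := b/2) in *. set (s := b mod 2) in *.
  clearbody p r q s.
  destruct (Nat.eq_dec b 1) as [B1|B1].
  - rewrite B1 in *. rewrite c1.
    destruct (Nat.eq_dec a 1) as [A1|A1]; [rewrite A1; reflexivity|].
    assert (1 <= p) by lia.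
    pose proof (IH' p 1 ltac:(lia) ltac:(lia) ltac:(lia)) as I1. rewrite c1 in I1.
    unfold absdiff in I1.
    destruct r as [|[|r]]; [ | | lia].
    + replace a with (p+p) by lia. replace (p+p+1) with (p+1+p) by lia.
      rewrite c_od, c_ev by lia. lia.
    + replace a with (p+1+p) by lia. replace (p+1+p+1) with (p+1+(p+1)) by lia.
      rewrite c_od, c_ev1 by lia. lia.
  - assert (1 <= p) by lia. assert (1 <= q) by lia.
    destruct r as [|[|r]]; [| | lia]; destruct s as [|[|s]]; try lia.
    + replace a with (p+p) by lia. replace b with (q+q) by lia.
      replace (p+p+(q+q)) with ((p+q)+(p+q)) by lia.
      rewrite !c_ev by lia.
      pose proof (IH' p q ltac:(lia) ltac:(lia) ltac:(lia)) as I1. unfold absdiff in I1. lia.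
    + replace a with (p+p) by lia. replace b with (q+1+q) by lia.
      replace (p+p+(q+1+q)) with ((p+q)+1+(p+q)) by lia.
      rewrite !c_od, !c_ev by lia.
      pose proof (IH' p q ltac:(lia) ltac:(lia) ltac:(lia)) as I1.
      pose proof (IH' p (q+1) ltac:(lia) ltac:(lia) ltac:(lia)) as I2.
      replace (p+q+1) with (p+(q+1)) by lia.
      unfold absdiff in I1, I2. lia.
    + replace a with (p+1+p) by lia. replace b with (q+q) by lia.
      replace (p+1+p+(q+q)) with ((p+q)+1+(p+q)) by lia.
      rewrite !c_od, !c_ev by lia.
      pose proof (IH' p q ltac:(lia) ltac:(lia) ltac:(lia)) as I1.
      pose proof (IH' (p+1) q ltac:(lia) ltac:(lia) ltac:(lia)) as I2.
      replace (p+q+1) with (p+1+q) by lia.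
      unfold absdiff in I1, I2. lia.
    + replace a with (p+1+p) by lia. replace b with (q+1+q) by lia.
      replace (p+1+p+(q+1+q)) with ((p+q)+1+((p+q)+1)) by lia.
      rewrite !c_od, c_ev1 by lia.
      pose proof (IH' p (q+1) ltac:(lia) ltac:(lia) ltac:(lia)) as I1.
      pose proof (IH' (p+1) q ltac:(lia) ltac:(lia) ltac:(lia)) as I2.
      replace (p+1+q) with (p+q+1) in I2 by lia.
      replace (p+(q+1)) with (p+q+1) in I1 by lia.
      unfold absdiff in I1, I2. lia.
Qed.

(* T, Ta, Tb range over the (unique up to isomorphism) maximally balanced
   trees with n, na, nb leaves respectively. *)
Theorem lemma3 (n na nb : nat) (T Ta Tb : btree) :
  2 <= n -> 1 <= nb -> nb <= na -> na + nb = n ->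
  max_balanced T -> leaves T = n ->
  max_balanced Ta -> leaves Ta = na ->
  max_balanced Tb -> leaves Tb = nb ->
  colless T <= colless Ta + colless Tb + (na - nb).
Proof.
  intros H2 Hb Hab Hn HT LT HTa LTa HTb LTb.
  rewrite !colless_mb by assumption. rewrite LT, LTa, LTb.
  pose proof (main n na nb Hn Hb Hab) as M. rewrite Hn in M.
  unfold absdiff in M. lia.
Qed.
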